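(* Let $\varphi:\mathbb{R}^n\times\mathbb{R}^m\to\mathbb{R}\cup\{+\infty\}$ be a closed proper convex function and $L(x,\lambda)=\inf_u\{\varphi(x,u)-\langle\lambda,u\rangle\}$. Let $(x^*,\lambda^* )$ be a saddle point of $L$, i.e. $L(x^*,\lambda)\leqslant L(x^*,\lambda^* )\leqslant L(x,\lambda^* )$ for all $x,\lambda$. Let $H\in\mathbb{R}^{m\times m}$ be symmetric positive definite and let $(A_k),(a_k),(b_k),(c_k)$, $k\geqslant0$, be real sequences with $a_k>0$, $b_k\geqslant0$, $c_k>0$ and $$A_{k+1}-A_k=a_k,\quad A_k=a_kb_k,\quad A_0=b_0=0,\quad c_k\geqslant a_k.$$ Let $\lambda_0\in\mathbb{R}^m$, $z_0=\lambda_0$, and for $k\geqslant0$ $$\tilde\lambda_{k+1}=\frac{1}{b_k+1}z_k+\frac{b_k}{b_k+1}\lambda_k,$$ $$(x_{k+1},u_{k+1})\in\arg\min_{x,u}\Big\{\varphi(x,u)-\langle\tilde\lambda_{k+1},u\rangle+\frac{c_k}{2(b_k+1)}\|u\|_H^2\Big\},$$ $$\lambda_{k+1}=\tilde\lambda_{k+1}-\frac{c_k}{b_k+1}Hu_{k+1},\qquad z_{k+1}=z_k+\frac{a_k}{c_k}(b_k+1)(\lambda_{k+1}-\tilde\lambda_{k+1})\;(=z_k-a_kHu_{k+1}),$$ where the minimizers are assumed to exist. Then for every $k\geqslant1$, $$L(x^*,\lambda^* )-L(x_k,\lambda_k)\leqslant\frac{\|\lambda_0-\lambda^*\|^2_{H^{-1}}}{2A_k},$$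 and for every $k\geqslant0$, $$\min_{0\leqslant j\leqslant k}\|u_{j+1}\|_H^2\leqslant\frac{\|\lambda_0-\lambda^*\|^2_{H^{-1}}}{\sum_{j=0}^ka_j^2}.$$
   Context: $\|u\|_M^2=u^{\mathrm T}Mu$ for a symmetric positive definite matrix $M$. $\varphi$ plays the role of a perturbation function of an objective $f(x)=\varphi(x,0)$. *)

(* Defs.v *)
From HB Require Import structures.
From mathcomp Require Import all_boot all_order all_algebra.
From mathcomp Require Import all_classical all_reals ereal topology normedtype sequences.
Set Implicit Arguments. Unset Strict Implicit. Unset Printing Implicit Defensive.
Import Order.TTheory GRing.Theory Num.Theory.
Import numFieldNormedType.Exports.
Local Open Scope ring_scope.
Local Open Scope classical_set_scope.

Definition ip (R : realType) (m : nat) (v w : 'cV[R]_m) : R := (v^T *m w) 0 0.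

Definition sqnormM (R : realType) (m : nat) (M : 'M[R]_m) (u : 'cV[R]_m) : R :=
  (u^T *m M *m u) 0 0.

Definition spd (R : realType) (m : nat) (M : 'M[R]_m) : Prop :=
  M^T = M /\ forall u : 'cV[R]_m, u != 0 -> 0 < sqnormM M u.

Definition proper_fun (R : realType) (n m : nat) (phi : 'cV[R]_n -> 'cV[R]_m -> \bar R)
  : Prop :=
  (forall x u, phi x u != -oo%E) /\ exists x u, phi x u != +oo%E.

Definition convex_fun (R : realType) (n m : nat) (phi : 'cV[R]_n -> 'cV[R]_m -> \bar R)
  : Prop :=
  forall (x1 x2 : 'cV[R]_n) (u1 u2 : 'cV[R]_m) (t : R), 0 <= t <= 1 ->
    (phi (t *: x1 + (1 - t) *: x2)%R (t *: u1 + (1 - t) *: u2)%R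
     <= t%:E * phi x1 u1 + (1 - t)%:E * phi x2 u2)%E.

(* closed = epigraph closed in R^n x R^m x R (sequential closedness, with
   convergence in R^n, R^m taken componentwise) *)
Definition closed_fun (R : realType) (n m : nat) (phi : 'cV[R]_n -> 'cV[R]_m -> \bar R)
  : Prop :=
  forall (X : nat -> 'cV[R]_n) (U : nat -> 'cV[R]_m) (T : nat -> R)
         (x : 'cV[R]_n) (u : 'cV[R]_m) (t : R),
    (forall k, (phi (X k) (U k) <= (T k)%:E)%E) ->
    (forall i, (fun k => X k i ord0) @ \oo --> (x i ord0 : R)) ->
    (forall i, (fun k => U k i ord0) @ \oo --> (u i ord0 : R)) ->
    T @ \oo --> t ->
    (phi x u <= t%:E)%E.

Definition lagr (R : realType) (n m : nat) (phi : 'cV[R]_n -> 'cV[R]_m -> \bar R)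
  (x : 'cV[R]_n) (lam : 'cV[R]_m) : \bar R :=
  ereal_inf [set (phi x u - (ip lam u)%:E)%E | u in [set: 'cV[R]_m]].

Definition saddle_point (R : realType) (n m : nat) (phi : 'cV[R]_n -> 'cV[R]_m -> \bar R)
  (xs : 'cV[R]_n) (ls : 'cV[R]_m) : Prop :=
  forall x lam, (lagr phi xs lam <= lagr phi xs ls)%E /\
                (lagr phi xs ls <= lagr phi x ls)%E.

(* Main.v *)
Require Import Defs.
From HB Require Import structures.
From mathcomp Require Import all_boot all_order all_algebra.
From mathcomp Require Import all_classical all_reals ereal topology normedtype sequences.
From mathcomp Require Import ring lra.
Import Order.TTheory GRing.Theory Num.Theory.
Import numFieldNormedType.Exports.
Local Open Scope ring_scope.

Section IP.
Variables (R : realType) (m : nat).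
Implicit Types (v w y : 'cV[R]_m) (M : 'M[R]_m).

Lemma ipE v w : ip v w = \sum_i v i 0 * w i 0.
Proof. by rewrite /ip !mxE; apply: eq_bigr => i _; rewrite !mxE. Qed.

Lemma ipC v w : ip v w = ip w v.
Proof. by rewrite !ipE; apply: eq_bigr => i _; rewrite mulrC. Qed.

Lemma ipDl v w y : ip (v + w) y = ip v y + ip w y.
Proof. by rewrite !ipE -big_split; apply: eq_bigr => i _; rewrite !mxE mulrDl. Qed.

Lemma ipBl v w y : ip (v - w) y = ip v y - ip w y.
Proof. by rewrite !ipE -sumrB; apply: eq_bigr => i _; rewrite !mxE mulrBl. Qed.

Lemma ipZl (a : R) v w : ip (a *: v) w = a * ip v w.
Proof. by rewrite !ipE mulr_sumr; apply: eq_bigr => i _; rewrite !mxE mulrA. Qed.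

Lemma ipDr v w y : ip y (v + w) = ip y v + ip y w.
Proof. by rewrite ipC ipDl ![ip _ y]ipC. Qed.
Lemma ipBr v w y : ip y (v - w) = ip y v - ip y w.
Proof. by rewrite ipC ipBl ![ip _ y]ipC. Qed.
Lemma ipZr (a : R) v w : ip w (a *: v) = a * ip w v.
Proof. by rewrite ipC ipZl ipC. Qed.

Lemma ipMl M v w : ip (M *m v) w = ip v (M^T *m w).
Proof. by rewrite /ip trmx_mul mulmxA. Qed.

Lemma sqnE M v : sqnormM M v = ip v (M *m v).
Proof. by rewrite /sqnormM /ip mulmxA. Qed.

Lemma spd_ge0 M v : spd M -> 0 <= sqnormM M v.
Proof.
case=> _ hp; have [->|nz] := eqVneq v 0.
  by rewrite sqnE mulmx0 /ip mulmx0 mxE.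
exact/ltW/hp.
Qed.

Lemma spd_unit M : spd M -> M \in unitmx.
Proof.
move=> [hs hp]; rewrite -row_free_unit -kermx_eq0; apply/negPn/negP.
case/rowV0Pn => r /sub_kermxP hr rnz.
have : r^T != 0 by rewrite -(inj_eq (@trmx_inj _ _ _)) trmxK linear0.
move/hp; rewrite sqnE -{1}hs -trmx_mul hr linear0 /ip mulmx0 mxE.
by rewrite ltxx.
Qed.

Lemma lim0 (X Y : R) :
  (forall t, 0 < t -> t <= 1 -> 0 <= X + t * Y) -> 0 <= X.
Proof.
move=> h; rewrite leNgt; apply/negP => hX.
have hY := normr_ge0 Y.
have hD : 0 < - X + `|Y| by lra.
pose t := - X / (- X + `|Y|).
have htD : t * (- X + `|Y|) = - X by rewrite /t mulfVK // gt_eqF.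
have ht0 : 0 < t by rewrite /t divr_gt0 // oppr_gt0.
have ht1 : t <= 1 by rewrite /t ler_pdivrMr // mul1r; lra.
have := h t ht0 ht1.
have : t * Y <= t * `|Y| by rewrite ler_pM2l // ler_norm.
nra.
Qed.

Variables (n : nat) (phi : 'cV[R]_n -> 'cV[R]_m -> \bar R).

Lemma opt_cond (H : 'M[R]_m) (lt : 'cV[R]_m) (s : R) x0 u0 (p0 : R) :
  convex_fun phi -> proper_fun phi -> spd H -> 0 <= s ->
  phi x0 u0 = p0%:E ->
  (forall x' u', (phi x0 u0 - (ip lt u0)%:E + (s * sqnormM H u0)%:E <=
     phi x' u' - (ip lt u')%:E + (s * sqnormM H u')%:E)%E) ->
  forall x' u', ((p0 - ip (lt - (2 * s) *: (H *m u0)) u0)%:E <=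
     phi x' u' - (ip (lt - (2 * s) *: (H *m u0)) u')%:E)%E.
Proof.
move=> hconv [hninf _] hH hs hp0 hmin x' u'.
case E: (phi x' u') => [p'| |]; last by move: (hninf x' u'); rewrite E.
  2: by rewrite /= leey.
rewrite -EFinB lee_fin.
have hsym : H^T = H by case: hH.
have hB : ip u0 (H *m u') = ip u' (H *m u0) by rewrite ipC ipMl hsym.
set L0 := ip lt u0; set L' := ip lt u'.
set Q0 := ip u0 (H *m u0); set Q' := ip u' (H *m u'); set B := ip u' (H *m u0).
rewrite !ipBl !ipZl -![ip (H *m u0) _]ipC -/L0 -/L' -/Q0 -/B.
suff : 0 <= (p' - p0 - L' + L0 + 2 * s * B - 2 * s * Q0) by lra.
apply: (@lim0 _ (s * (Q' - 2 * B + Q0))) => t ht0 ht1.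
have ht : 0 <= t <= 1 by rewrite ltW.
have hc := hconv x' x0 u' u0 t ht.
have hm := hmin (t *: x' + (1 - t) *: x0) (t *: u' + (1 - t) *: u0).
rewrite hp0 E -!EFinM -EFinD in hc.
have := leeD2r ((- ip lt (t *: u' + (1 - t) *: u0))%:E +
   (s * sqnormM H (t *: u' + (1 - t) *: u0))%:E) hc.
rewrite addeA.
move=> /(le_trans hm).
rewrite hp0 -!EFinD lee_fin.
rewrite !sqnE !mulmxDr !ipDl !ipDr -!scalemxAr !ipZl !ipZr hB -/L0 -/L' -/Q0 -/Q' -/B.
move=> h.
have : 0 <= t * ((p' - p0 - L' + L0 + 2 * s * B - 2 * s * Q0) + t * (s * (Q' - 2 * B + Q0))).
  rewrite -subr_ge0 in h; apply: (le_trans h); rewrite le_eqVlt; apply/orP; left; apply/eqP; ring.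
by rewrite pmulr_rge0.
Qed.

End IP.

Lemma bigmin_le' (R : realType) (F : nat -> R) x0 k (j : 'I_k) :
  \big[Num.min/x0]_(i < k) F i <= F j.
Proof. exact: (bigmin_le x0 j (fun i : 'I_k => F i)). Qed.

Lemma step_real (R : realType) (A0 A1 a b c d G0 G1 p' l0 l1 lt zz ss q N0 N1 : R) :
 0 < a -> 0 <= b -> a <= c -> 0 <= q -> A0 = a*b -> A1 = A0 + a ->
 A0 * (G0 - p' + l0) <= 0 -> d <= p' - ss -> G1 = p' - l1 ->
 l1 = lt - c/(b+1) * q -> lt = (b+1)^-1 * zz + b/(b+1) * l0 ->
 N1 = N0 - 2*a*(zz - ss) + a^+2 * q ->
 A1 * (d - G1) + N1/2 + a^+2/2 * q <= A0*(d - G0) + N0/2.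
Proof.
move=> ha hb hac hq eA0 eA1 h1 h2 eG1 el1 elt eN1.
have hb1 : b + 1 != 0 by apply: lt0r_neq0; lra.
subst A1 G1 l1 lt N1 A0.
rewrite -subr_ge0.

match goal with |- is_true (_ <= ?e) => 
  have -> : e = - (a * b * (G0 - p' + l0)) + a * (p' - ss - d) + a * ((c - a) * q) end.
field; first exact: hb1.
have : 0 <= a * (p' - ss - d) by apply: mulr_ge0; lra.
have : 0 <= a * ((c - a) * q) by apply: mulr_ge0; [lra| apply: mulr_ge0; lra].
lra.
Qed.

Theorem theorem8 (R : realType) (n m : nat)
  (phi : 'cV[R]_n -> 'cV[R]_m -> \bar R)
  (xs : 'cV[R]_n) (ls : 'cV[R]_m) (H : 'M[R]_m)
  (A a b c : nat -> R)
  (x : nat -> 'cV[R]_n) (u lam lamt z : nat -> 'cV[R]_m) :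
  closed_fun phi -> proper_fun phi -> convex_fun phi ->
  saddle_point phi xs ls ->
  spd H ->
  (forall k, 0 < a k) -> (forall k, 0 <= b k) -> (forall k, 0 < c k) ->
  (forall k, A k.+1 - A k = a k) -> (forall k, A k = a k * b k) ->
  A 0 = 0 -> b 0 = 0 -> (forall k, a k <= c k) ->
  z 0 = lam 0 ->
  (forall k, lamt k.+1 = (b k + 1)^-1 *: z k + (b k / (b k + 1)) *: lam k) ->
  (forall k (x' : 'cV[R]_n) (u' : 'cV[R]_m),
     (phi (x k.+1) (u k.+1) - (ip (lamt k.+1) (u k.+1))%:E
        + (c k / (2 * (b k + 1)) * sqnormM H (u k.+1))%:E
      <= phi x' u' - (ip (lamt k.+1) u')%:E
        + (c k / (2 * (b k + 1)) * sqnormM H u')%:E)%E) ->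
  (forall k, lam k.+1 = lamt k.+1 - (c k / (b k + 1)) *: (H *m u k.+1)) ->
  (forall k, z k.+1 = z k + (a k / c k * (b k + 1)) *: (lam k.+1 - lamt k.+1)) ->
  (forall k, (1 <= k)%N ->
     (lagr phi xs ls - lagr phi (x k) (lam k)
       <= (sqnormM (invmx H) (lam 0 - ls) / (2 * A k))%:E)%E)
  /\
  (forall k,
     \big[Num.min/sqnormM H (u 1)]_(j < k.+1) sqnormM H (u j.+1)
       <= sqnormM (invmx H) (lam 0 - ls) / \sum_(j < k.+1) a j ^+ 2).

Proof.
move=> hclosed hprop hconv hsad hH ha hb hc hA hAab hA0 hb0 hac hz0 hlt hmin hlam hz.
have hsym : H^T = H by case: hH.
have hU := @spd_unit _ _ H hH.
set Hi := invmx H.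
have hb1 : forall k, b k + 1 != 0.
  by move=> k; apply: lt0r_neq0; have := hb k; lra.
have hAge0 : forall k, 0 <= A k.
  by move=> k; rewrite hAab; apply: mulr_ge0; [exact: ltW | exact: hb].
have hAS : forall k, A k.+1 = A k + a k by move=> k; rewrite -(hA k); ring.
pose p k := fine (phi (x k) (u k)).
have hp : forall k, phi (x k.+1) (u k.+1) = (p k.+1)%:E.
  move=> k; rewrite /p.
  case E: (phi (x k.+1) (u k.+1)) => [r| |] //.
    exfalso; case: hprop => hni [x0 [u0 hx0]].
    have := hmin k x0 u0; rewrite E.
    case E0 : (phi x0 u0) hx0 => [r0| |] // _.
  by case: hprop => hni _; move: (hni (x k.+1) (u k.+1)); rewrite E.
pose G k := p k - ip (lam k) (u k).
have hopt : forall k x' u', ((G k.+1)%:E <= phi x' u' - (ip (lam k.+1) u')%:E)%E.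
  move=> k x' u'.
  have e : lam k.+1 = lamt k.+1 - (2 * (c k / (2 * (b k + 1)))) *: (H *m u k.+1).
    rewrite hlam; congr (_ - _ *: _); field.
    exact: hb1.
  rewrite /G e.
  have hs : 0 <= c k / (2 * (b k + 1)).
    apply: divr_ge0; first exact: ltW.
    by apply: mulr_ge0 => //; have := hb k; lra.
  exact: (@opt_cond _ _ _ _ _ _ _ _ _ _ hconv hprop hH hs (hp k) (hmin k)).
have hL : forall k, lagr phi (x k.+1) (lam k.+1) = (G k.+1)%:E.
  move=> k; apply/eqP; rewrite eq_le; apply/andP; split.
    apply: ge_ereal_inf; exists (G k.+1)%:E => //.
    by exists (u k.+1) => //; rewrite hp -EFinB.
  by apply/ereal_infP => y [u' _ <-]; exact: hopt.
have hDlo : forall k, ((G k.+1)%:E <= lagr phi xs ls)%E.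
  move=> k; apply: le_trans (hsad xs (lam k.+1)).1.
  by apply/ereal_infP => y [u' _ <-]; exact: hopt.
have hDup : forall k, (lagr phi xs ls <= (p k.+1 - ip ls (u k.+1))%:E)%E.
  move=> k; apply: le_trans (hsad (x k.+1) ls).2 _.
  by apply: ereal_inf_lbound; exists (u k.+1) => //; rewrite hp EFinB.
have [d hD] : exists d, lagr phi xs ls = d%:E.
  move: (hDlo 0%N) (hDup 0%N); case: (lagr phi xs ls) => [r| |].
  - by move=> _ _; exists r.
  - by move=> _; rewrite leye_eq.
  - by rewrite leeNy_eq.
have R1 : forall k, G k.+1 <= p k.+2 - ip (lam k.+1) (u k.+2).
  by move=> k; have := hopt k (x k.+2) (u k.+2); rewrite hp -EFinB lee_fin.
have R2 : forall k, d <= p k.+1 - ip ls (u k.+1).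
  by move=> k; have := hDup k; rewrite hD lee_fin.
have R3 : forall k, G k.+1 <= d.
  by move=> k; have := hDlo k; rewrite hD lee_fin.
pose N w := sqnormM Hi w.
have hN0 : forall w, 0 <= N w.
  move=> w; have := @spd_ge0 _ _ H (Hi *m w) hH.
  by rewrite /N !sqnE (mulKVmx hU) ipC.
have hzk : forall k, z k.+1 = z k - a k *: (H *m u k.+1).
  move=> k; rewrite hz hlam addrAC subrr add0r scalerN scalerA.
  congr (_ - _ *: _); field.
  by rewrite hb1 /=; apply: lt0r_neq0.
have hNs : forall k, N (z k.+1 - ls) = N (z k - ls)
     - 2 * a k * (ip (z k) (u k.+1) - ip ls (u k.+1)) + a k ^+ 2 * sqnormM H (u k.+1).
  move=> k; rewrite hzk.
  have -> : z k - a k *: (H *m u k.+1) - ls = (z k - ls) - a k *: (H *m u k.+1).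
    by rewrite addrAC.
  have hw : ip (z k - ls) (u k.+1) = ip (z k) (u k.+1) - ip ls (u k.+1) by rewrite ipBl.
  set w := z k - ls.
  rewrite /N !sqnE mulmxBr -scalemxAr (mulKmx hU) !ipBl !ipBr !ipZl !ipZr.
  rewrite ipMl hsym (mulKVmx hU) [ip (H *m _) (u _)]ipC [ip (u _) w]ipC hw.
  ring.
pose E k := A k * (d - G k) + N (z k - ls) / 2.
pose q k := sqnormM H (u k.+1).
have hq0 : forall k, 0 <= q k by move=> k; exact: spd_ge0.
have hstep : forall k, E k.+1 + a k ^+ 2 / 2 * q k <= E k.
  move=> k.
  apply: (@step_real R (A k) (A k.+1) (a k) (b k) (c k) d (G k) (G k.+1) (p k.+1)
     (ip (lam k) (u k.+1)) (ip (lam k.+1) (u k.+1)) (ip (lamt k.+1) (u k.+1))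
     (ip (z k) (u k.+1)) (ip ls (u k.+1)) (q k) (N (z k - ls)) (N (z k.+1 - ls))).
  - exact: ha.
  - exact: hb.
  - exact: hac.
  - exact: hq0.
  - exact: hAab.
  - exact: hAS.
  - case: k => [|k]; first by rewrite hA0 mul0r.
    apply: mulr_ge0_le0; first exact: hAge0.
    by have := R1 k; lra.
  - exact: R2.
  - by [].
  - by rewrite hlam ipBl ipZl /q sqnE [ip (H *m _) _]ipC.
  - by rewrite hlt ipDl !ipZl.
  - exact: hNs.
have hsum : forall k, E k + (\sum_(j < k) a j ^+ 2 * q j) / 2 <= E 0%N.
  elim=> [|k IH]; first by rewrite big_ord0 mul0r addr0.
  rewrite big_ord_recr /=.
  have := hstep k; lra.
have hE0 : E 0%N = N (lam 0%N - ls) / 2 by rewrite /E hA0 mul0r add0r hz0.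
have hElo : forall k, A k * (d - G k) <= E k.
  by move=> k; rewrite /E; have := hN0 (z k - ls); lra.
have hAG : forall k, 0 <= A k * (d - G k).
  case=> [|k]; first by rewrite hA0 mul0r.
  by apply: mulr_ge0; [exact: hAge0 | have := R3 k; lra].
have hS0 : forall k, 0 <= \sum_(j < k) a j ^+ 2 * q j.
  by move=> k; apply: sumr_ge0 => j _; apply: mulr_ge0; [exact: sqr_ge0 | exact: hq0].
split.
- case=> [//|k] _.
  rewrite hD hL -EFinB lee_fin.
  have hApos : 0 < A k.+1 by rewrite hAS; have := ha k; have := hAge0 k; lra.
  rewrite ler_pdivlMr; last by lra.
  have := hElo k.+1; have := hsum k.+1; have := hS0 k.+1; rewrite hE0 /N.
  lra.
- move=> k.
  have hS : \sum_(j < k.+1) a j ^+ 2 * q j <= N (lam 0%N - ls).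
    have := hsum k.+1; have := hElo k.+1; have := hAG k.+1; rewrite hE0; lra.
  have hpos : 0 < \sum_(j < k.+1) a j ^+ 2.
    rewrite big_ord_recl.
    have : 0 <= \sum_(i < k) a (bump 0 i) ^+ 2 by apply: sumr_ge0 => j _; exact: sqr_ge0.
    have : 0 < a 0%N ^+ 2 by apply: exprn_gt0.
    lra.
  rewrite ler_pdivlMr // mulr_sumr.
  apply: le_trans hS; apply: ler_sum => j _.
  rewrite mulrC; apply: ler_wpM2l; first exact: sqr_ge0.
  exact: (@bigmin_le' R (fun i => sqnormM H (u i.+1))).
Qed.
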